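(* Consider the controlled network SIS system $\dot x=(-D-H(x)+B-XB)x$, with $B$ irreducible, where $H(x)=\operatorname{diag}(h_1(x_1),\dots,h_n(x_n))$ and each $h_i:[0,1]\to\mathbb{R}_{\ge0}$ is bounded, smooth, monotonically nondecreasing, with $h_i(0)=0$. Suppose $s(-D+B)\le 0$. Then $0_n$ is the unique equilibrium of the system in $\Xi_n$, and $\lim_{t\to\infty}x(t)=0_n$ for all $x(0)\in\Xi_n$.
   Context: $n\ge2$, $D=\operatorname{diag}(d_1,\dots,d_n)$ with $d_i>0$, $B=(b_{ij})\in\mathbb{R}^{n\times n}$ entrywise nonnegative, $X=\operatorname{diag}(x_1,\dots,x_n)$; componentwise $\dot x_i=-(d_i+h_i(x_i))x_i+(1-x_i)\sum_j b_{ij}x_j$. $B$ irreducible is equivalent to the associated directed graph being strongly connected. $\Xi_n=[0,1]^n$; trajectories starting in $\Xi_n$ remain in $\Xi_n$. $s(M)$ denotes the largest real part of the eigenvalues of a square matrix $M$. *)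

(* Defs.v *)
From Stdlib Require Export Reals Lra Lia Relations.
Open Scope R_scope.

(* Vectors in R^n are functions nat -> R (only indices i < n matter);
   n x n matrices are functions nat -> nat -> R. *)

Fixpoint rsum (n : nat) (f : nat -> R) : R :=
  match n with O => 0 | S k => rsum k f + f k end.

Definition mxvec (n : nat) (M : nat -> nat -> R) (v : nat -> R) (i : nat) : R :=
  rsum n (fun j => M i j * v j).

(* a + i*c is a (complex) eigenvalue of the real matrix M:
   M (u + i w) = (a + i c)(u + i w) for some nonzero complex vector u + i w *)
Definition is_eigenvalue (n : nat) (M : nat -> nat -> R) (a c : R) : Prop :=
  exists u w : nat -> R,
    (exists k, (k < n)%nat /\ (u k <> 0 \/ w k <> 0)) /\
    forall i, (i < n)%nat ->
      mxvec n M u i = a * u i - c * w i /\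
      mxvec n M w i = c * u i + a * w i.

(* s(M) <= 0 : every eigenvalue has real part <= 0 (s(M) is the maximum of
   the real parts over the nonempty finite spectrum). *)
Definition spectral_abscissa_nonpos (n : nat) (M : nat -> nat -> R) : Prop :=
  forall a c, is_eigenvalue n M a c -> a <= 0.

Definition minusD_plusB (d : nat -> R) (b : nat -> nat -> R) : nat -> nat -> R :=
  fun i j => b i j - (if Nat.eqb i j then d i else 0).

(* B irreducible <=> associated directed graph (edge i -> j iff b_ij > 0) is
   strongly connected on the node set {0,..,n-1}. *)
Definition edge (n : nat) (b : nat -> nat -> R) (i j : nat) : Prop :=
  (i < n)%nat /\ (j < n)%nat /\ 0 < b i j.

Definition irreducible (n : nat) (b : nat -> nat -> R) : Prop :=
  forall i j, (i < n)%nat -> (j < n)%nat -> i <> j -> clos_trans nat (edge n b) i j.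

(* smoothness on [0,1]: derivatives of every order exist on [0,1]
   (one-sided at the endpoints). *)
Definition has_deriv_on01 (f : R -> R) (t l : R) : Prop :=
  forall eps, 0 < eps -> exists delta, 0 < delta /\
    forall s, 0 <= s <= 1 -> s <> t -> Rabs (s - t) < delta ->
      Rabs ((f s - f t) / (s - t) - l) < eps.

Definition smooth_on01 (f : R -> R) : Prop :=
  exists Df : nat -> R -> R,
    (forall t, 0 <= t <= 1 -> Df O t = f t) /\
    forall k t, 0 <= t <= 1 -> has_deriv_on01 (Df k) t (Df (S k) t).

Definition admissible_gain (h : R -> R) : Prop :=
  (forall s, 0 <= s <= 1 -> 0 <= h s) /\
  (exists Mb, forall s, 0 <= s <= 1 -> h s <= Mb) /\
  smooth_on01 h /\
  (forall s1 s2, 0 <= s1 -> s1 <= s2 -> s2 <= 1 -> h s1 <= h s2) /\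
  h 0 = 0.

Definition in_Xi (n : nat) (x : nat -> R) : Prop :=
  forall i, (i < n)%nat -> 0 <= x i <= 1.

Definition sis_field (n : nat) (d : nat -> R) (b : nat -> nat -> R)
  (h : nat -> R -> R) (x : nat -> R) (i : nat) : R :=
  - (d i + h i (x i)) * x i + (1 - x i) * rsum n (fun j => b i j * x j).

Definition is_equilibrium (n : nat) (d : nat -> R) (b : nat -> nat -> R)
  (h : nat -> R -> R) (x : nat -> R) : Prop :=
  forall i, (i < n)%nat -> sis_field n d b h x i = 0.

(* Main.v *)
Require Import Defs.
From Stdlib Require Import Reals Lra Lia Relations Classical IndefiniteDescription ZArith.
Open Scope R_scope.

Lemma rsum_ext n f g : (forall i, (i<n)%nat -> f i = g i) -> rsum n f = rsum n g.
Proof. induction n; intros H; simpl; auto. rewrite IHn; [rewrite H|]; auto; intros; apply H; lia. Qed.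

Lemma rsum_plus n f g : rsum n (fun i => f i + g i) = rsum n f + rsum n g.
Proof. induction n; simpl; [lra|]. rewrite IHn; lra. Qed.

Lemma rsum_scal n c f : rsum n (fun i => c * f i) = c * rsum n f.
Proof. induction n; simpl; [lra|]. rewrite IHn; lra. Qed.

Lemma rsum_minus n f g : rsum n (fun i => f i - g i) = rsum n f - rsum n g.
Proof. induction n; simpl; [lra|]. rewrite IHn; lra. Qed.

Lemma rsum_zero n : rsum n (fun _ => 0) = 0.
Proof. induction n; simpl; [lra|]. rewrite IHn; lra. Qed.

Lemma rsum_le n f g : (forall i, (i<n)%nat -> f i <= g i) -> rsum n f <= rsum n g.
Proof. induction n; intros H; simpl; [lra|].
  assert (rsum n f <= rsum n g) by (apply IHn; intros; apply H; lia).
  assert (f n <= g n) by (apply H; lia). lra. Qed.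

Lemma rsum_nonneg n f : (forall i, (i<n)%nat -> 0 <= f i) -> 0 <= rsum n f.
Proof. intros H. rewrite <- (rsum_zero n). apply rsum_le. auto. Qed.

Lemma rsum_ge_term n f k : (k<n)%nat -> (forall i, (i<n)%nat -> i<>k -> 0 <= f i) -> f k <= rsum n f.
Proof. induction n; intros Hk H; [lia|]. simpl.
  destruct (Nat.eq_dec k n) as [->|Hne].
  - assert (0 <= rsum n f) by (apply rsum_nonneg; intros; apply H; lia). lra.
  - assert (f k <= rsum n f) by (apply IHn; [lia| intros; apply H; lia]).
    assert (0 <= f n) by (apply H; lia). lra. Qed.

Lemma rsum_lt n f g k : (forall i, (i<n)%nat -> f i <= g i) -> (k<n)%nat -> f k < g k -> rsum n f < rsum n g.
Proof. induction n; intros H Hk Hlt; [lia|]. simpl.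
  destruct (Nat.eq_dec k n) as [->|Hne].
  - assert (rsum n f <= rsum n g) by (apply rsum_le; intros; apply H; lia). lra.
  - assert (rsum n f < rsum n g) by (apply IHn; auto; lia).
    assert (f n <= g n) by (apply H; lia). lra. Qed.

Lemma rsum_swap n m f : rsum n (fun i => rsum m (fun j => f i j)) = rsum m (fun j => rsum n (fun i => f i j)).
Proof. induction n; simpl.
  - rewrite rsum_zero; auto.
  - rewrite IHn. rewrite <- rsum_plus. auto. Qed.

Lemma rsum_delta n (c : R) i x : (i<n)%nat ->
  rsum n (fun j => (if Nat.eqb i j then c else 0) * x j) = c * x i.
Proof. induction n; intros Hi; [lia|]. simpl.
  destruct (Nat.eq_dec i n) as [->|Hne].
  - rewrite Nat.eqb_refl. rewrite (rsum_ext n _ (fun _ => 0)). rewrite rsum_zero; lra.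
    intros j Hj. destruct (Nat.eqb_spec n j); [lia|lra].
  - rewrite IHn by lia. destruct (Nat.eqb_spec i n); [lia|lra]. Qed.

Lemma rsum_delta2 n i x : (i<n)%nat ->
  rsum n (fun j => x j * (if Nat.eqb j i then 1 else 0)) = x i.
Proof. intros Hi. rewrite (rsum_ext n _ (fun j => (if Nat.eqb i j then 1 else 0) * x j)).
  rewrite rsum_delta; auto; lra.
  intros j _. rewrite Nat.eqb_sym. lra. Qed.

Lemma rsum_nonneg_zero n f k : (forall i, (i<n)%nat -> 0 <= f i) -> rsum n f <= 0 -> (k < n)%nat -> f k = 0.
Proof. intros H Hs Hk. assert (f k <= rsum n f) by (apply rsum_ge_term; auto).
  assert (0 <= f k) by auto. lra. Qed.

Lemma rsum_abs_le n f B : (forall i, (i<n)%nat -> Rabs (f i) <= B) -> Rabs (rsum n f) <= INR n * B.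
Proof. induction n; intros H; cbn [rsum].
  - rewrite Rabs_R0; simpl; lra.
  - rewrite S_INR. eapply Rle_trans; [apply Rabs_triang|].
    assert (Rabs (rsum n f) <= INR n * B) by (apply IHn; intros; apply H; lia).
    assert (Rabs (f n) <= B) by (apply H; lia). lra. Qed.

Lemma mxvec_zero n M i : mxvec n M (fun _ => 0) i = 0.
Proof. unfold mxvec. rewrite (rsum_ext n _ (fun _ => 0)); [apply rsum_zero|]. intros; lra. Qed.

Lemma mxvec_plus n M u w i : mxvec n M (fun j => u j + w j) i = mxvec n M u i + mxvec n M w i.
Proof. unfold mxvec. rewrite <- rsum_plus. apply rsum_ext. intros; lra. Qed.

Lemma incr_ge (f : nat -> nat) : (forall k, (f k < f (S k))%nat) -> forall k, (k <= f k)%nat.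
Proof. intros H k; induction k; [lia|]. specialize (H k); lia. Qed.

Lemma incr_mono (f : nat -> nat) : (forall k, (f k < f (S k))%nat) -> forall k k', (k <= k')%nat -> (f k <= f k')%nat.
Proof. intros H k k' Hk. induction Hk; [lia|]. specialize (H m); lia. Qed.

Lemma Un_cv_sub (u : nat -> R) l (f : nat -> nat) : (forall k, (f k < f (S k))%nat) -> Un_cv u l -> Un_cv (fun k => u (f k)) l.
Proof. intros Hf Hu eps Heps. destruct (Hu eps Heps) as [N HN]. exists N. intros k Hk.
  apply HN. pose proof (incr_ge f Hf k). lia. Qed.

Lemma bw1 (u : nat -> R) : (forall k, 0 <= u k <= 1) ->
  exists f : nat -> nat, (forall k, (f k < f (S k))%nat) /\ exists l, Un_cv (fun k => u (f k)) l.
Proof.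
  intros Hu. destruct (Bolzano_Weierstrass u (fun c => 0 <= c <= 1) (compact_P3 0 1) Hu) as [l Hl].
  assert (H : forall N k : nat, exists p, (N <= p)%nat /\ Rabs (u p - l) < / INR (S k)).
  { intros N k. assert (Hpos : 0 < / INR (S k)) by (apply Rinv_0_lt_compat; apply lt_0_INR; lia).
    destruct (Hl (disc l (mkposreal _ Hpos)) N) as [p [Hp1 Hp2]].
    - exists (mkposreal _ Hpos). unfold included. auto.
    - exists p. split; auto. }
  set (c := fun N k => proj1_sig (constructive_indefinite_description _ (H N k))).
  assert (Hc : forall N k, (N <= c N k)%nat /\ Rabs (u (c N k) - l) < / INR (S k)).
  { intros N k. unfold c. destruct (constructive_indefinite_description _ (H N k)); simpl; auto. }
  set (f := nat_rect (fun _ => nat) (c 0%nat 0%nat) (fun k p => c (S p) (S k))).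
  assert (Hf1 : forall k, Rabs (u (f k) - l) < / INR (S k)).
  { intros [|k]; simpl; apply Hc. }
  exists f. split.
  - intros k. change (f (S k)) with (c (S (f k)) (S k)). destruct (Hc (S (f k)) (S k)). lia.
  - exists l. intros eps Heps.
    destruct (archimed (/ eps)) as [Ha _].
    assert (Hz : (0 <= up (/ eps))%Z).
    { apply le_IZR. assert (0 < / eps) by (apply Rinv_0_lt_compat; auto). lra. }
    exists (Z.to_nat (up (/ eps))). intros k Hk. unfold R_dist.
    eapply Rlt_le_trans; [apply Hf1|].
    assert (HN : / eps < INR (S k)).
    { rewrite S_INR. apply le_INR in Hk. rewrite INR_IZR_INZ in Hk.
      rewrite Z2Nat.id in Hk by auto. lra. }
    assert (0 < / eps) by (apply Rinv_0_lt_compat; auto).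
    rewrite <- (Rinv_inv eps). apply Rlt_le. apply Rinv_lt_contravar; auto.
    apply Rmult_lt_0_compat; lra.
Qed.

Lemma bwn (m : nat) (z : nat -> nat -> R) : (forall k i, (i < m)%nat -> 0 <= z k i <= 1) ->
  exists f : nat -> nat, (forall k, (f k < f (S k))%nat) /\
    exists l : nat -> R, forall i, (i < m)%nat -> Un_cv (fun k => z (f k) i) (l i).
Proof.
  induction m; intros Hz.
  - exists (fun k => k). split; [intros; lia|]. exists (fun _ => 0). intros; lia.
  - destruct IHm as [f [Hf [l Hl]]]. { intros; apply Hz; lia. }
    destruct (bw1 (fun k => z (f k) m)) as [g [Hg [lm Hlm]]]. { intros; apply Hz; lia. }
    exists (fun k => f (g k)). split.
    + intros k. pose proof (Hg k). pose proof (incr_mono f Hf (S (g k)) (g (S k))). specialize (Hf (g k)). lia.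
    + exists (fun i => if Nat.eqb i m then lm else l i). intros i Hi.
      destruct (Nat.eqb_spec i m) as [->|Hne].
      * exact Hlm.
      * apply (Un_cv_sub (fun k => z (f k) i) (l i) g Hg). apply Hl. lia.
Qed.

Definition metzler n (A : nat -> nat -> R) := forall i j, (i<n)%nat -> (j<n)%nat -> i<>j -> 0 <= A i j.
Definition relA n (A : nat -> nat -> R) p q := (p<n)%nat /\ (q<n)%nat /\ (p = q \/ 0 < A p q).
Definition irrA n A := forall i j, (i<n)%nat -> (j<n)%nat -> i<>j -> clos_trans nat (relA n A) i j.
Definition posv n (z : nat -> R) := forall i, (i<n)%nat -> 0 < z i.
Definition subinv n A lam z := posv n z /\ forall i, (i<n)%nat -> mxvec n A z i <= lam * z i.

Lemma Un_cv_const (c : R) : Un_cv (fun _ => c) c.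
Proof. intros eps He. exists 0%nat. intros. unfold R_dist. rewrite Rminus_diag, Rabs_R0. auto. Qed.

Lemma Un_cv_rsum m (u : nat -> nat -> R) l : (forall i, (i<m)%nat -> Un_cv (fun k => u k i) (l i)) ->
  Un_cv (fun k => rsum m (u k)) (rsum m l).
Proof. induction m; intros H; simpl. apply Un_cv_const.
  apply CV_plus. apply IHm; intros; apply H; lia. apply H; lia. Qed.

Lemma Un_cv_mxvec n A (u : nat -> nat -> R) l i : (forall j, (j<n)%nat -> Un_cv (fun k => u k j) (l j)) ->
  Un_cv (fun k => mxvec n A (u k) i) (mxvec n A l i).
Proof. intros H. unfold mxvec. apply (Un_cv_rsum n (fun k j => A i j * u k j)).
  intros j Hj. apply CV_mult. apply Un_cv_const. apply H; auto. Qed.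

Lemma mxvec_scal n A c z i : mxvec n A (fun j => c * z j) i = c * mxvec n A z i.
Proof. unfold mxvec. rewrite <- rsum_scal. apply rsum_ext; intros; ring. Qed.

Lemma mxvec_ge_diag n A z i : metzler n A -> (forall j, (j<n)%nat -> 0 <= z j) -> (i<n)%nat ->
  A i i * z i <= mxvec n A z i.
Proof. intros HM Hz Hi. unfold mxvec. apply (rsum_ge_term n (fun j => A i j * z j)); auto.
  intros j Hj Hne. apply Rmult_le_pos; auto. Qed.

Lemma subinv_lb n A lam z : (0 < n)%nat -> metzler n A -> subinv n A lam z -> A 0%nat 0%nat <= lam.
Proof. intros Hn HM [Hp Hs].
  assert (H1 := mxvec_ge_diag n A z 0 HM (fun j Hj => Rlt_le _ _ (Hp j Hj)) Hn).
  assert (H2 := Hs 0%nat Hn). assert (H3 := Hp 0%nat Hn).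
  apply (Rmult_le_reg_r (z 0%nat)); auto. lra. Qed.

Definition totA n (A : nat -> nat -> R) := rsum n (fun i => rsum n (fun j => Rabs (A i j))).

Lemma subinv_ne n A : subinv n A (totA n A) (fun _ => 1).
Proof. split. intros i _; lra. intros i Hi. rewrite Rmult_1_r. unfold mxvec, totA.
  apply Rle_trans with (rsum n (fun j => Rabs (A i j))).
  - apply rsum_le. intros. rewrite Rmult_1_r. apply Rle_abs.
  - apply (rsum_ge_term n (fun i0 => rsum n (fun j => Rabs (A i0 j)))); auto.
    intros. apply rsum_nonneg. intros; apply Rabs_pos. Qed.

Lemma subinv_norm n A lam z : (0 < n)%nat -> subinv n A lam z ->
  exists z', subinv n A lam z' /\ rsum n z' = 1 /\ forall i, (i<n)%nat -> 0 <= z' i <= 1.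
Proof. intros Hn [Hp Hs].
  assert (HS : 0 < rsum n z).
  { apply Rlt_le_trans with (z 0%nat). apply Hp; auto. apply rsum_ge_term; auto.
    intros; apply Rlt_le; auto. }
  exists (fun j => / rsum n z * z j). split; [split|split].
  - intros i Hi. apply Rmult_lt_0_compat; auto. apply Rinv_0_lt_compat; auto.
  - intros i Hi. rewrite mxvec_scal. specialize (Hs i Hi).
    assert (0 < / rsum n z) by (apply Rinv_0_lt_compat; auto). nra.
  - rewrite rsum_scal. field. lra.
  - intros i Hi. assert (0 < / rsum n z) by (apply Rinv_0_lt_compat; auto).
    assert (z i <= rsum n z) by (apply rsum_ge_term; auto; intros; apply Rlt_le; auto).
    assert (0 < z i) by auto. split. nra.
    apply (Rmult_le_reg_l (rsum n z)); auto. rewrite <- Rmult_assoc, Rinv_r by lra. lra.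
Qed.

Lemma prop_zero n A z rho p q : metzler n A -> (forall j, (j<n)%nat -> 0 <= z j) ->
  (forall j, (j<n)%nat -> mxvec n A z j <= rho * z j) -> z p = 0 -> relA n A p q -> z q = 0.
Proof. intros HM Hz Hs Hzp [Hpn [Hqn [->|Hpq]]]; auto.
  destruct (Nat.eq_dec p q) as [->|Hne]; auto.
  assert (H := Hs p Hpn). rewrite Hzp, Rmult_0_r in H. unfold mxvec in H.
  assert (H0 : A p q * z q = 0).
  { apply (rsum_nonneg_zero n (fun j => A p j * z j)); auto.
    intros j Hj. destruct (Nat.eq_dec j p) as [->|Hjp]. rewrite Hzp; lra.
    apply Rmult_le_pos; auto. }
  destruct (Rmult_integral _ _ H0); lra. Qed.

Lemma prop_zero_tc n A z rho p q : metzler n A -> (forall j, (j<n)%nat -> 0 <= z j) ->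
  (forall j, (j<n)%nat -> mxvec n A z j <= rho * z j) -> clos_trans nat (relA n A) p q -> z p = 0 -> z q = 0.
Proof. intros HM Hz Hs Hc. induction Hc; intros; eauto using prop_zero. Qed.

Definition goodk n A rho k := exists y, posv n y /\ (forall j, (j<n)%nat -> mxvec n A y j <= rho * y j)
  /\ mxvec n A y k < rho * y k.

Lemma mxvec_pert n A y (delta : R) k j : (k < n)%nat ->
  mxvec n A (fun l => y l - delta * (if Nat.eqb l k then 1 else 0)) j = mxvec n A y j - delta * A j k.
Proof. intros Hk. unfold mxvec. rewrite <- (rsum_delta2 n k (fun l => A j l)) by auto.
  rewrite <- rsum_scal, <- rsum_minus. apply rsum_ext; intros; ring. Qed.

Lemma good_step n A rho i k : metzler n A -> (i<n)%nat -> (k<n)%nat -> i <> k -> 0 < A i k ->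
  goodk n A rho k -> goodk n A rho i.
Proof. intros HM Hi Hk Hne HA [y [Hp [Hs Hst]]].
  set (g := rho * y k - mxvec n A y k).
  assert (Hg : 0 < g) by (unfold g; lra).
  assert (Hyk : 0 < y k) by auto.
  set (delta := Rmin (y k / 2) (g / (1 + Rabs (rho - A k k)))).
  assert (Hab : 0 <= Rabs (rho - A k k)) by apply Rabs_pos.
  assert (Hd1 : delta <= y k / 2) by apply Rmin_l.
  assert (Hd2 : delta <= g / (1 + Rabs (rho - A k k))) by apply Rmin_r.
  assert (Hd0 : 0 < delta).
  { unfold delta. apply Rmin_pos. lra. apply Rdiv_lt_0_compat; lra. }
  assert (Hd3 : delta * (rho - A k k) <= g).
  { apply Rle_trans with (delta * Rabs (rho - A k k)).
    apply Rmult_le_compat_l; [lra| apply Rle_abs].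
    apply Rle_trans with (g / (1 + Rabs (rho - A k k)) * Rabs (rho - A k k)).
    apply Rmult_le_compat_r; auto.
    unfold Rdiv. rewrite Rmult_assoc. 
    assert (Rabs (rho - A k k) * / (1 + Rabs (rho - A k k)) <= 1).
    { apply (Rmult_le_reg_r (1 + Rabs (rho - A k k))). lra.
      rewrite Rmult_assoc, Rinv_l by lra. lra. }
    nra. }
  exists (fun l => y l - delta * (if Nat.eqb l k then 1 else 0)). split; [|split].
  - intros j Hj. destruct (Nat.eqb_spec j k) as [->|]. lra. rewrite Rmult_0_r, Rminus_0_r; auto.
  - intros j Hj. rewrite mxvec_pert by auto. destruct (Nat.eqb_spec j k) as [->|Hjk].
    + unfold g in Hd3. lra.
    + assert (0 <= A j k) by (apply HM; auto). specialize (Hs j Hj). nra.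
  - rewrite mxvec_pert by auto. destruct (Nat.eqb_spec i k) as [|]; [lia|].
    specialize (Hs i Hi). nra.
Qed.

Lemma good_path n A rho i k : metzler n A -> clos_trans nat (relA n A) i k -> goodk n A rho k -> goodk n A rho i.
Proof. intros HM Hc. induction Hc as [i k [Hi [Hk [->|Hik]]]| i j k _ IH1 _ IH2]; auto.
  destruct (Nat.eq_dec i k) as [->|Hne]; auto. intros; eapply good_step; eauto. Qed.

Lemma good_accum n A rho (k : nat) : (k < n)%nat -> (forall i, (i<n)%nat -> goodk n A rho i) ->
  forall m, exists y, posv n y /\ (forall j, (j<n)%nat -> mxvec n A y j <= rho * y j)
   /\ (forall j, (j < m)%nat -> (j < n)%nat -> mxvec n A y j < rho * y j).
Proof. intros Hk Hg. induction m.
  - destruct (Hg k Hk) as [y [Hp [Hs _]]]. exists y. repeat split; auto. intros; lia.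
  - destruct IHm as [y [Hp [Hs Hst]]].
    destruct (Nat.lt_ge_cases m n) as [Hm|Hm].
    + destruct (Hg m Hm) as [y' [Hp' [Hs' Hst']]].
      exists (fun j => y j + y' j). split; [|split].
      * intros j Hj. specialize (Hp j Hj); specialize (Hp' j Hj). lra.
      * intros j Hj. rewrite mxvec_plus. specialize (Hs j Hj); specialize (Hs' j Hj). lra.
      * intros j Hj Hjn. rewrite mxvec_plus. specialize (Hs j Hjn); specialize (Hs' j Hjn).
        destruct (Nat.eq_dec j m) as [->|]. lra. assert (mxvec n A y j < rho * y j) by (apply Hst; lia). lra.
    + exists y. repeat split; auto. intros; apply Hst; lia.
Qed.

Lemma strict_eps n A rho y : posv n y -> (forall j, (j<n)%nat -> mxvec n A y j < rho * y j) ->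
  forall m, exists e, 0 < e /\ forall j, (j < m)%nat -> (j<n)%nat -> mxvec n A y j <= (rho - e) * y j.
Proof. intros Hp Hs. induction m.
  - exists 1. split; [lra|]. intros; lia.
  - destruct IHm as [e [He Hj]].
    destruct (Nat.lt_ge_cases m n) as [Hm|Hm].
    + set (e' := Rmin e ((rho * y m - mxvec n A y m) / y m)).
      assert (Hym := Hp m Hm). assert (Hsm := Hs m Hm).
      assert (He1 : e' <= e) by apply Rmin_l.
      assert (He2 : e' <= (rho * y m - mxvec n A y m) / y m) by apply Rmin_r.
      exists e'. split. unfold e'. apply Rmin_pos; auto. apply Rdiv_lt_0_compat; lra.
      intros j Hj1 Hj2. destruct (Nat.eq_dec j m) as [->|].
      * assert (e' * y m <= rho * y m - mxvec n A y m).
        { apply Rmult_le_compat_r with (r := y m) in He2; [|lra].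
          unfold Rdiv in He2. rewrite Rmult_assoc, Rinv_l in He2 by lra. lra. }
        lra.
      * assert (mxvec n A y j <= (rho - e) * y j) by (apply Hj; lia).
        assert (0 < y j) by auto. nra.
    + exists e. split; auto. intros; apply Hj; lia.
Qed.

Lemma Un_cv_squeeze (a : nat -> R) rho : (forall k, rho <= a k <= rho + / INR (S k)) -> Un_cv a rho.
Proof. intros H eps Heps.
  destruct (archimed (/ eps)) as [Ha _].
  assert (0 < / eps) by (apply Rinv_0_lt_compat; auto).
  assert (Hz : (0 <= up (/ eps))%Z) by (apply le_IZR; lra).
  exists (Z.to_nat (up (/ eps))). intros k Hk. unfold R_dist.
  assert (HN : / eps < INR (S k)).
  { rewrite S_INR. apply le_INR in Hk. rewrite INR_IZR_INZ in Hk.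
    rewrite Z2Nat.id in Hk by auto. lra. }
  assert (/ INR (S k) < eps).
  { rewrite <- (Rinv_inv eps). apply Rinv_lt_contravar; auto. apply Rmult_lt_0_compat; lra. }
  specialize (H k). rewrite Rabs_right; lra. Qed.

Theorem perron n A : (0 < n)%nat -> metzler n A -> irrA n A ->
  exists rho z, posv n z /\ forall i, (i<n)%nat -> mxvec n A z i = rho * z i.
Proof.
  intros Hn HM HI.
  set (E := fun mu => exists z, subinv n A (- mu) z).
  assert (HE1 : bound E).
  { exists (- A 0%nat 0%nat). intros mu [z Hz]. apply subinv_lb in Hz; auto. lra. }
  assert (HE2 : exists mu, E mu).
  { exists (- totA n A). exists (fun _ => 1). rewrite Ropp_involutive. apply subinv_ne. }
  destruct (completeness E HE1 HE2) as [mm [Hub Hlub]].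
  set (rho := - mm).
  assert (Hinf : forall lam z, subinv n A lam z -> rho <= lam).
  { intros lam z Hz. assert (E (- lam)) by (exists z; rewrite Ropp_involutive; auto).
    apply Hub in H. unfold rho. lra. }
  assert (Happ : forall eps, 0 < eps -> exists lam z, subinv n A lam z /\ lam < rho + eps).
  { intros eps He. apply NNPP. intros Hno.
    assert (is_upper_bound E (mm - eps)).
    { intros mu [z Hz]. apply Rnot_lt_le. intros Hlt. apply Hno. exists (- mu), z. split; auto.
      unfold rho; lra. }
    apply Hlub in H. lra. }
  assert (Hseq : forall k : nat, exists p : R * (nat -> R),
     subinv n A (fst p) (snd p) /\ rsum n (snd p) = 1 /\ (forall i, (i<n)%nat -> 0 <= snd p i <= 1)
     /\ fst p < rho + / INR (S k)).
  { intros k. assert (0 < / INR (S k)) by (apply Rinv_0_lt_compat; apply lt_0_INR; lia).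
    destruct (Happ _ H) as [lam [z [Hz Hl]]].
    destruct (subinv_norm n A lam z Hn Hz) as [z' [Hz' [Hs Hb]]].
    exists (lam, z'). simpl. auto. }
  set (c := fun k => proj1_sig (constructive_indefinite_description _ (Hseq k))).
  assert (Hc : forall k, subinv n A (fst (c k)) (snd (c k)) /\ rsum n (snd (c k)) = 1 /\
     (forall i, (i<n)%nat -> 0 <= snd (c k) i <= 1) /\ fst (c k) < rho + / INR (S k)).
  { intros k. unfold c. destruct (constructive_indefinite_description _ (Hseq k)); simpl; auto. }
  destruct (bwn n (fun k => snd (c k))) as [f [Hf [l Hl]]].
  { intros k i Hi. apply Hc; auto. }
  assert (Hlam : Un_cv (fun k => fst (c (f k))) rho).
  { apply (Un_cv_sub (fun k => fst (c k))); auto. apply Un_cv_squeeze. intros k.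
    destruct (Hc k) as [H1 [_ [_ H4]]]. split; [eapply Hinf; eauto| lra]. }
  assert (Hl0 : forall i, (i<n)%nat -> 0 <= l i).
  { intros i Hi. apply (@Rle_cv_lim (fun _ => 0) (fun k => snd (c (f k)) i) 0 (l i)); auto.
    intros k; apply Hc; auto. apply Un_cv_const. }
  assert (Hl1 : rsum n l = 1).
  { apply (UL_sequence (fun k => rsum n (snd (c (f k))))).
    apply (Un_cv_rsum n (fun k => snd (c (f k)))). auto.
    eapply Un_cv_ext; [|apply (Un_cv_const 1)]. intros k; simpl. symmetry; apply Hc. }
  assert (Hls : forall i, (i<n)%nat -> mxvec n A l i <= rho * l i).
  { intros i Hi. apply (@Rle_cv_lim (fun k => mxvec n A (snd (c (f k))) i) (fun k => fst (c (f k)) * snd (c (f k)) i) (mxvec n A l i) (rho * l i)).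
    - intros k. destruct (Hc (f k)) as [[_ H] _]. auto.
    - apply (Un_cv_mxvec n A (fun k => snd (c (f k)))). auto.
    - apply CV_mult; auto. }
  assert (Hlp : posv n l).
  { intros i Hi. destruct (Hl0 i Hi) as [|Hz]; auto. exfalso. symmetry in Hz.
    assert (forall j, (j<n)%nat -> l j = 0).
    { intros j Hj. destruct (Nat.eq_dec i j) as [<-|Hne]; auto.
      eapply prop_zero_tc; eauto. }
    rewrite (rsum_ext n l (fun _ => 0)) in Hl1 by auto. rewrite rsum_zero in Hl1. lra. }
  exists rho, l. split; auto.
  apply NNPP. intros Hno. apply not_all_ex_not in Hno. destruct Hno as [k Hk].
  apply imply_to_and in Hk. destruct Hk as [Hk Hneq].
  assert (Hkst : mxvec n A l k < rho * l k) by (specialize (Hls k Hk); lra).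
  assert (Hgk : goodk n A rho k) by (exists l; auto).
  assert (Hall : forall i, (i<n)%nat -> goodk n A rho i).
  { intros i Hi. destruct (Nat.eq_dec i k) as [->|Hne]; auto. eapply good_path; eauto. }
  destruct (good_accum n A rho k Hk Hall n) as [y [Hyp [Hys Hyst]]].
  destruct (strict_eps n A rho y Hyp (fun j Hj => Hyst j Hj Hj) n) as [e [He Hej]].
  assert (rho <= rho - e). { apply (Hinf _ y). split; auto. }
  lra.
Qed.

Lemma ct_rev (Rl : nat -> nat -> Prop) i j : clos_trans nat Rl j i -> clos_trans nat (fun p q => Rl q p) i j.
Proof. intros H. induction H. apply t_step; auto. eapply t_trans; eauto. Qed.

Lemma ct_mono (R1 R2 : nat -> nat -> Prop) i j : (forall p q, R1 p q -> R2 p q) -> clos_trans nat R1 i j -> clos_trans nat R2 i j.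
Proof. intros HR H. induction H. apply t_step; auto. eapply t_trans; eauto. Qed.

Lemma mxvec_A n d b x i : (i<n)%nat -> mxvec n (minusD_plusB d b) x i = mxvec n b x i - d i * x i.
Proof. intros Hi. unfold mxvec, minusD_plusB. rewrite <- (rsum_delta n (d i) i x Hi).
  rewrite <- rsum_minus. apply rsum_ext; intros; ring. Qed.

Lemma sis_decomp n d b h x i : (i<n)%nat ->
  sis_field n d b h x i = mxvec n (minusD_plusB d b) x i - h i (x i) * x i - x i * mxvec n b x i.
Proof. intros Hi. rewrite mxvec_A by auto. unfold sis_field, mxvec. ring. Qed.

Lemma left_vec n d b : (2 <= n)%nat -> (forall i, (i < n)%nat -> 0 < d i) ->
  (forall i j, (i < n)%nat -> (j < n)%nat -> 0 <= b i j) -> irreducible n b ->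
  spectral_abscissa_nonpos n (minusD_plusB d b) ->
  exists v, posv n v /\ forall j, (j<n)%nat -> rsum n (fun i => v i * minusD_plusB d b i j) <= 0.
Proof.
  intros Hn Hd Hb Hirr Hs. set (A := minusD_plusB d b).
  assert (HM : metzler n A).
  { intros i j Hi Hj Hne. unfold A, minusD_plusB. destruct (Nat.eqb_spec i j); [lia|].
    specialize (Hb i j Hi Hj). lra. }
  assert (HrelA : forall p q, edge n b p q -> relA n A p q).
  { intros p q [Hp [Hq Hpq]]. split; auto. split; auto. destruct (Nat.eq_dec p q); auto.
    right. unfold A, minusD_plusB. destruct (Nat.eqb_spec p q); [lia|lra]. }
  assert (HI : irrA n A).
  { intros i j Hi Hj Hne. eapply ct_mono; [|apply Hirr; eauto]. auto. }
  set (AT := fun i j => A j i).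
  assert (HMT : metzler n AT). { intros i j Hi Hj Hne. apply HM; auto. }
  assert (HIT : irrA n AT).
  { intros i j Hi Hj Hne. eapply ct_mono; [|apply ct_rev; apply HI; eauto].
    intros p q [Hq [Hp Hor]]. split; auto. split; auto. destruct Hor; auto. }
  destruct (perron n A ltac:(lia) HM HI) as [rho [z [Hz Hze]]].
  destruct (perron n AT ltac:(lia) HMT HIT) as [rho' [v [Hv Hve]]].
  assert (Hrho : rho <= 0).
  { apply (Hs rho 0). exists z, (fun _ => 0). split.
    - exists 0%nat. split. lia. left. specialize (Hz 0%nat ltac:(lia)). lra.
    - intros i Hi. rewrite mxvec_zero. rewrite Hze by auto. split; ring. }
  assert (Heq : rho = rho').
  { assert (H1 : rsum n (fun i => v i * mxvec n A z i) = rho * rsum n (fun i => v i * z i)).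
    { rewrite <- rsum_scal. apply rsum_ext. intros i Hi. rewrite Hze by auto. ring. }
    assert (H2 : rsum n (fun i => v i * mxvec n A z i) = rho' * rsum n (fun i => v i * z i)).
    { unfold mxvec. rewrite (rsum_ext n _ (fun i => rsum n (fun j => v i * A i j * z j))).
      rewrite rsum_swap. rewrite <- rsum_scal. apply rsum_ext. intros j Hj.
      rewrite (rsum_ext n _ (fun i => AT j i * v i * z j)).
      rewrite (rsum_ext n _ (fun i => z j * (AT j i * v i))) by (intros; ring).
      rewrite rsum_scal. specialize (Hve j Hj). unfold mxvec in Hve. rewrite Hve. ring.
      intros; unfold AT; ring.
      intros i Hi. rewrite <- rsum_scal. apply rsum_ext; intros; ring. }
    assert (HP : 0 < rsum n (fun i => v i * z i)).
    { apply Rlt_le_trans with (v 0%nat * z 0%nat).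
      apply Rmult_lt_0_compat; [apply Hv|apply Hz]; lia.
      apply (rsum_ge_term n (fun i => v i * z i)). lia.
      intros; apply Rlt_le, Rmult_lt_0_compat; auto. }
    rewrite H1 in H2. apply (Rmult_eq_reg_r (rsum n (fun i => v i * z i))); lra. }
  exists v. split; auto. intros j Hj. specialize (Hve j Hj). unfold mxvec, AT in Hve.
  rewrite (rsum_ext n _ (fun i => A i j * v i)) by (intros; unfold A; ring).
  rewrite Hve. subst rho'. specialize (Hv j Hj). nra.
Qed.

Lemma vA_le n A v x : posv n v -> (forall j, (j<n)%nat -> rsum n (fun i => v i * A i j) <= 0) ->
  (forall j, (j<n)%nat -> 0 <= x j) -> rsum n (fun i => v i * mxvec n A x i) <= 0.
Proof. intros Hv HA Hx. unfold mxvec.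
  rewrite (rsum_ext n _ (fun i => rsum n (fun j => v i * A i j * x j))).
  rewrite rsum_swap. rewrite <- (rsum_zero n). apply rsum_le. intros j Hj.
  rewrite (rsum_ext n _ (fun i => x j * (v i * A i j))) by (intros; ring).
  rewrite rsum_scal. specialize (HA j Hj). specialize (Hx j Hj). nra.
  intros i Hi. rewrite <- rsum_scal. apply rsum_ext; intros; ring. Qed.

Lemma key_ineq n d b h v x : posv n v ->
  (forall j, (j<n)%nat -> rsum n (fun i => v i * minusD_plusB d b i j) <= 0) ->
  (forall i, (i < n)%nat -> admissible_gain (h i)) -> in_Xi n x ->
  rsum n (fun i => v i * sis_field n d b h x i) <= - rsum n (fun i => v i * (x i * mxvec n b x i)).
Proof. intros Hv HA Hh Hx.
  rewrite (rsum_ext n _ (fun i => v i * mxvec n (minusD_plusB d b) x i + (- (v i * (h i (x i) * x i)) - v i * (x i * mxvec n b x i)))).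
  2: { intros i Hi. rewrite sis_decomp by auto. ring. }
  rewrite rsum_plus, rsum_minus.
  assert (H1 : rsum n (fun i => v i * mxvec n (minusD_plusB d b) x i) <= 0).
  { apply vA_le; auto. intros j Hj; apply Hx; auto. }
  assert (H2 : 0 <= rsum n (fun i => v i * (h i (x i) * x i))).
  { apply rsum_nonneg. intros i Hi. destruct (Hh i Hi) as [Hh0 _]. specialize (Hx i Hi).
    specialize (Hh0 (x i) Hx). specialize (Hv i Hi). apply Rmult_le_pos; [lra|]. apply Rmult_le_pos; lra. }
  rewrite (rsum_ext n (fun i => - (v i * (h i (x i) * x i))) (fun i => -1 * (v i * (h i (x i) * x i)))) by (intros; ring).
  rewrite rsum_scal. lra. Qed.

Lemma Bx_nonneg n b x i : (i<n)%nat -> (forall i j, (i < n)%nat -> (j < n)%nat -> 0 <= b i j) -> in_Xi n x -> 0 <= mxvec n b x i.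
Proof. intros Hi Hb Hx. apply rsum_nonneg. intros j Hj. apply Rmult_le_pos; [apply Hb; auto| apply Hx; auto]. Qed.

Lemma equil_part n d b h v : posv n v ->
  (forall j, (j<n)%nat -> rsum n (fun i => v i * minusD_plusB d b i j) <= 0) ->
  (forall i, (i < n)%nat -> 0 < d i) ->
  (forall i j, (i < n)%nat -> (j < n)%nat -> 0 <= b i j) ->
  (forall i, (i < n)%nat -> admissible_gain (h i)) ->
  forall xs, in_Xi n xs -> (is_equilibrium n d b h xs <-> (forall i, (i < n)%nat -> xs i = 0)).
Proof. intros Hv HA Hd Hb Hh xs Hx. split.
  - intros He. assert (Hk := key_ineq n d b h v xs Hv HA Hh Hx).
    rewrite (rsum_ext n _ (fun _ => 0)) in Hk by (intros i Hi; rewrite He by auto; ring).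
    rewrite rsum_zero in Hk.
    intros i Hi.
    assert (Hz : v i * (xs i * mxvec n b xs i) = 0).
    { apply (rsum_nonneg_zero n (fun i => v i * (xs i * mxvec n b xs i))); auto.
      intros j Hj. apply Rmult_le_pos. apply Rlt_le, Hv; auto. apply Rmult_le_pos. apply Hx; auto.
      apply Bx_nonneg; auto. lra. }
    assert (Hz2 : xs i * mxvec n b xs i = 0).
    { destruct (Rmult_integral _ _ Hz) as [H|H]; auto. specialize (Hv i Hi). lra. }
    specialize (He i Hi). unfold sis_field in He. fold (mxvec n b xs i) in He.
    destruct (Hh i Hi) as [Hh0 _]. specialize (Hx i Hi). specialize (Hh0 (xs i) Hx).
    specialize (Hd i Hi).
    assert (E1 : mxvec n b xs i = (d i + h i (xs i)) * xs i) by nra.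
    assert (Hq : (d i + h i (xs i)) * xs i * xs i = 0).
    { replace ((d i + h i (xs i)) * xs i * xs i) with (xs i * mxvec n b xs i) by (rewrite E1; ring). auto. }
    assert (d i + h i (xs i) > 0) by lra.
    destruct (Rmult_integral _ _ Hq) as [Hq1|Hq1]; [destruct (Rmult_integral _ _ Hq1)|]; lra.
  - intros H0 i Hi. unfold sis_field. rewrite H0 by auto.
    rewrite (rsum_ext n _ (fun _ => 0)). rewrite rsum_zero. ring.
    intros j Hj. rewrite H0 by auto. ring.
Qed.

Lemma nat_above (r : R) : exists k : nat, r < INR k.
Proof. destruct (archimed r) as [Ha _]. destruct (Z_le_gt_dec 0 (up r)) as [Hz|Hz].
  - exists (Z.to_nat (up r)). rewrite INR_IZR_INZ, Z2Nat.id by auto. auto.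
  - exists 0%nat. simpl. assert (Hz2 : (up r < 0)%Z) by lia. apply IZR_lt in Hz2. lra. Qed.

Lemma nonincr f f' a b : a <= b -> (forall t, a <= t <= b -> derivable_pt_lim f t (f' t)) ->
  (forall t, a <= t <= b -> f' t <= 0) -> f b <= f a.
Proof. intros Hab Hd Hn. destruct (Rle_lt_or_eq_dec _ _ Hab) as [Hlt| ->]; [|lra].
  destruct (MVT_cor2 f f' a b Hlt Hd) as [c [Hc1 Hc2]].
  assert (f' c <= 0) by (apply Hn; lra). nra. Qed.

Lemma lip_of_deriv f f' K : (forall t, 0 <= t -> derivable_pt_lim f t (f' t)) ->
  (forall t, 0 <= t -> Rabs (f' t) <= K) ->
  forall s t, 0 <= s -> 0 <= t -> Rabs (f t - f s) <= K * Rabs (t - s).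
Proof. intros Hd HK.
  assert (H : forall s t, 0 <= s -> s < t -> Rabs (f t - f s) <= K * Rabs (t - s)).
  { intros s t Hs Hst. destruct (MVT_cor2 f f' s t Hst) as [c [Hc1 Hc2]].
    intros; apply Hd; lra. rewrite Hc1, Rabs_mult. apply Rmult_le_compat_r. apply Rabs_pos. apply HK; lra. }
  intros s t Hs Ht. destruct (Rtotal_order s t) as [Hlt|[->|Hgt]].
  - auto.
  - rewrite !Rminus_diag, Rabs_R0. rewrite Rmult_0_r. lra.
  - rewrite Rabs_minus_sym, (Rabs_minus_sym t s). auto. Qed.

Definition lipf (f : R -> R) (L : R) := forall s t, 0 <= s -> 0 <= t -> Rabs (f t - f s) <= L * Rabs (t - s).
Definition lipE f := exists L, 0 <= L /\ lipf f L.
Definition boundE (f : R -> R) := exists B, 0 <= B /\ forall t, 0 <= t -> Rabs (f t) <= B.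

Lemma lipE_const c : lipE (fun _ => c).
Proof. exists 0. split. lra. intros s t _ _. rewrite Rminus_diag, Rabs_R0. rewrite Rmult_0_l. lra. Qed.

Lemma boundE_const c : boundE (fun _ => c).
Proof. exists (Rabs c). split. apply Rabs_pos. intros; lra. Qed.

Lemma lipE_plus f g : lipE f -> lipE g -> lipE (fun t => f t + g t).
Proof. intros [L1 [H1 Hf]] [L2 [H2 Hg]]. exists (L1 + L2). split. lra. intros s t Hs Ht.
  replace (f t + g t - (f s + g s)) with ((f t - f s) + (g t - g s)) by ring.
  eapply Rle_trans. apply Rabs_triang. specialize (Hf s t Hs Ht). specialize (Hg s t Hs Ht). lra. Qed.

Lemma boundE_plus f g : boundE f -> boundE g -> boundE (fun t => f t + g t).
Proof. intros [B1 [H1 Hf]] [B2 [H2 Hg]]. exists (B1 + B2). split. lra. intros t Ht.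
  eapply Rle_trans. apply Rabs_triang. specialize (Hf t Ht). specialize (Hg t Ht). lra. Qed.

Lemma lipE_mult f g : lipE f -> lipE g -> boundE f -> boundE g -> lipE (fun t => f t * g t).
Proof. intros [L1 [H1 Hf]] [L2 [H2 Hg]] [B1 [HB1 Hbf]] [B2 [HB2 Hbg]].
  exists (B1 * L2 + B2 * L1). split. nra. intros s t Hs Ht.
  replace (f t * g t - f s * g s) with (f t * (g t - g s) + g s * (f t - f s)) by ring.
  eapply Rle_trans. apply Rabs_triang. rewrite !Rabs_mult.
  specialize (Hf s t Hs Ht). specialize (Hg s t Hs Ht).
  specialize (Hbf t Ht). specialize (Hbg s Hs).
  assert (0 <= Rabs (f t)) by apply Rabs_pos. assert (0 <= Rabs (g s)) by apply Rabs_pos.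
  assert (0 <= Rabs (g t - g s)) by apply Rabs_pos. assert (0 <= Rabs (f t - f s)) by apply Rabs_pos.
  assert (0 <= Rabs (t - s)) by apply Rabs_pos.
  assert (Rabs (f t) * Rabs (g t - g s) <= B1 * (L2 * Rabs (t - s))).
  { apply Rmult_le_compat; auto. }
  assert (Rabs (g s) * Rabs (f t - f s) <= B2 * (L1 * Rabs (t - s))).
  { apply Rmult_le_compat; auto. }
  nra. Qed.

Lemma boundE_mult f g : boundE f -> boundE g -> boundE (fun t => f t * g t).
Proof. intros [B1 [H1 Hf]] [B2 [H2 Hg]]. exists (B1 * B2). split. nra. intros t Ht.
  rewrite Rabs_mult. apply Rmult_le_compat; auto; apply Rabs_pos. Qed.

Lemma lipE_rsum m (u : R -> nat -> R) : (forall i, (i<m)%nat -> lipE (fun t => u t i)) -> lipE (fun t => rsum m (u t)).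
Proof. induction m; intros H; simpl. apply lipE_const.
  apply (lipE_plus (fun t => rsum m (u t)) (fun t => u t m)). apply IHm; intros; apply H; lia. apply H; lia. Qed.

Lemma boundE_rsum m (u : R -> nat -> R) : (forall i, (i<m)%nat -> boundE (fun t => u t i)) -> boundE (fun t => rsum m (u t)).
Proof. induction m; intros H; simpl. apply boundE_const.
  apply (boundE_plus (fun t => rsum m (u t)) (fun t => u t m)). apply IHm; intros; apply H; lia. apply H; lia. Qed.

Lemma deriv_max_contra f m l s : derivable_pt_lim f m l -> l < 0 -> s < m ->
  (forall r, s <= r <= m -> f r <= f m) -> False.
Proof. intros Hd Hl Hsm Hmax.
  destruct (Hd (- l / 2) ltac:(lra)) as [delta Hdel].
  set (hh := - Rmin (delta / 2) ((m - s) / 2)).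
  assert (Hm1 : Rmin (delta / 2) ((m - s) / 2) <= delta / 2) by apply Rmin_l.
  assert (Hm2 : Rmin (delta / 2) ((m - s) / 2) <= (m - s) / 2) by apply Rmin_r.
  assert (Hdp := cond_pos delta).
  assert (Hm0 : 0 < Rmin (delta / 2) ((m - s) / 2)) by (apply Rmin_pos; lra).
  assert (Hh0 : hh <> 0) by (unfold hh; lra).
  assert (Hha : Rabs hh < delta) by (unfold hh; rewrite Rabs_Ropp, Rabs_right; lra).
  specialize (Hdel hh Hh0 Hha).
  set (q := (f (m + hh) - f m) / hh) in Hdel.
  assert (Hq : q < l / 2). { apply Rabs_def2 in Hdel. lra. }
  assert (Hfq : f (m + hh) - f m = q * hh) by (unfold q; field; auto).
  assert (f (m + hh) <= f m) by (apply Hmax; unfold hh; lra).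
  assert (hh < 0) by (unfold hh; lra). nra. Qed.

Lemma comp_conv (phi dphi beta : R -> R) (c : R) : 0 < c ->
  (forall t, 0 <= t -> derivable_pt_lim phi t (dphi t)) ->
  (forall t, 0 <= t -> 0 <= phi t <= 1) ->
  (forall t, 0 <= t -> 0 <= beta t) ->
  (forall t, 0 <= t -> dphi t <= - c * phi t + beta t) ->
  (forall eta, 0 < eta -> exists T, forall t, T <= t -> phi t * beta t < eta) ->
  forall eps, 0 < eps -> exists T, forall t, T <= t -> Rabs (phi t) < eps.
Proof.
  intros Hc Hd Hb Hbeta Hdp Hev eps He.
  destruct (Hev (c * eps * eps / 2)) as [T0' HT0']. { assert (0 < c * eps) by nra. nra. }
  set (T0 := Rmax T0' 0).
  assert (HT0a : T0' <= T0) by apply Rmax_l. assert (HT0b : 0 <= T0) by apply Rmax_r.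
  assert (Hneg : forall t, T0 <= t -> eps <= phi t -> dphi t <= - (c * eps / 2)).
  { intros t Ht Hp. specialize (HT0' t ltac:(lra)). specialize (Hdp t ltac:(lra)).
    specialize (Hbeta t ltac:(lra)).
    assert (beta t * eps <= phi t * beta t) by nra.
    assert (beta t * eps < c * eps * eps / 2) by lra.
    assert (beta t < c * eps / 2).
    { apply (Rmult_lt_reg_r eps); auto. lra. }
    nra. }
  set (tau := 2 / (c * eps)).
  assert (Htau : c * eps / 2 * tau = 1) by (unfold tau; field; lra).
  assert (Htau0 : 0 < tau) by (unfold tau; apply Rdiv_lt_0_compat; nra).
  assert (Hhit : exists s, T0 <= s /\ phi s < eps).
  { apply NNPP. intros Hno.
    assert (Hall : forall s, T0 <= s <= T0 + tau -> eps <= phi s).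
    { intros s Hs. apply Rnot_lt_le. intros Hlt. apply Hno. exists s. split; [lra|auto]. }
    assert (HW := nonincr (fun t => phi t + c * eps / 2 * t) (fun t => dphi t + c * eps / 2) T0 (T0 + tau) ltac:(lra)).
    simpl in HW.
    assert (phi (T0 + tau) + c * eps / 2 * (T0 + tau) <= phi T0 + c * eps / 2 * T0).
    { apply HW.
      - intros t Ht. apply derivable_pt_lim_plus. apply Hd; lra.
        replace (c * eps / 2) with (c * eps / 2 * 1) at 2 by ring.
        apply derivable_pt_lim_scal. apply derivable_pt_lim_id.
      - intros t Ht. assert (dphi t <= - (c * eps / 2)) by (apply Hneg; [lra| apply Hall; lra]). lra. }
    assert (eps <= phi (T0 + tau)) by (apply Hall; lra).
    assert (phi T0 <= 1) by (apply Hb; lra).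
    rewrite Rmult_plus_distr_l, Htau in H. lra. }
  destruct Hhit as [s [Hs1 Hs2]].
  exists s. intros t Ht. assert (Hb0 : 0 <= phi t <= 1) by (apply Hb; lra).
  rewrite Rabs_right by lra.
  apply Rnot_le_lt. intros Hge.
  assert (Hst : s < t) by (destruct (Rle_lt_or_eq_dec _ _ Ht); [auto| subst; lra]).
  destruct (continuity_ab_maj phi s t ltac:(lra)) as [mx [Hmx1 Hmx2]].
  { intros r Hr. assert (Hdr := Hd r ltac:(lra)).
    apply (derivable_continuous_pt phi r (exist _ (dphi r) Hdr)). }
  assert (Hpm : phi t <= phi mx) by (apply Hmx1; lra).
  assert (Hsm : s < mx).
  { destruct (Rle_lt_or_eq_dec _ _ (proj1 Hmx2)) as [|Heq]; auto. subst mx. lra. }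
  apply (deriv_max_contra phi mx (dphi mx) s).
  - apply Hd; lra.
  - assert (dphi mx <= - (c * eps / 2)) by (apply Hneg; lra). assert (0 < c * eps) by nra. lra.
  - auto.
  - intros r Hr. apply Hmx1. lra.
Qed.

Lemma g_to_0 (V dV g : R -> R) L : 0 <= L -> (forall t, 0 <= t -> derivable_pt_lim V t (dV t)) ->
  (forall t, 0 <= t -> dV t <= - g t) -> (forall t, 0 <= t -> 0 <= g t) ->
  (forall t, 0 <= t -> 0 <= V t) -> lipf g L ->
  forall eps, 0 < eps -> exists T, forall t, T <= t -> g t < eps.
Proof.
  intros HL Hd HdV Hg HV Hlip eps He. apply NNPP. intros Hno.
  assert (Hbig : forall T, exists t, T <= t /\ eps <= g t).
  { intros T. apply NNPP. intros H2. apply Hno. exists T. intros t Ht.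
    apply Rnot_le_lt. intros Hle. apply H2. exists t. auto. }
  set (tau := eps / (2 * (L + 1))).
  assert (Htau0 : 0 < tau) by (unfold tau; apply Rdiv_lt_0_compat; lra).
  assert (HLt : L * tau <= eps / 2).
  { unfold tau. apply (Rmult_le_reg_r (2 * (L + 1))). lra.
    replace (L * (eps / (2 * (L + 1))) * (2 * (L + 1))) with (L * eps) by (field; lra). nra. }
  assert (Hmono : forall t t', 0 <= t -> t <= t' -> V t' <= V t).
  { intros t t' Ht Htt. apply (nonincr V dV t t' Htt).
    intros r Hr; apply Hd; lra. intros r Hr. specialize (HdV r ltac:(lra)). specialize (Hg r ltac:(lra)). lra. }
  assert (Hdrop : forall t, 0 <= t -> eps <= g t -> V (t + tau) <= V t - eps / 2 * tau).
  { intros t Ht Hgt.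
    assert (HW := nonincr (fun r => V r + eps / 2 * r) (fun r => dV r + eps / 2) t (t + tau) ltac:(lra)).
    simpl in HW.
    assert (V (t + tau) + eps / 2 * (t + tau) <= V t + eps / 2 * t).
    { apply HW.
      - intros r Hr. apply derivable_pt_lim_plus. apply Hd; lra.
        replace (eps / 2) with (eps / 2 * 1) at 2 by ring.
        apply derivable_pt_lim_scal. apply derivable_pt_lim_id.
      - intros r Hr. specialize (HdV r ltac:(lra)). specialize (Hlip t r Ht ltac:(lra)).
        rewrite (Rabs_right (r - t)) in Hlip by lra. assert (Hl3 : g t - g r <= Rabs (g r - g t)) by (rewrite Rabs_minus_sym; apply Rle_abs).
        assert (L * (r - t) <= L * tau) by (apply Rmult_le_compat_l; lra). lra. }
    lra. }
  assert (Hind : forall k : nat, exists t, 0 <= t /\ V t <= V 0 - INR k * (eps / 2 * tau)).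
  { induction k.
    - exists 0. simpl. lra.
    - destruct IHk as [t [Ht HVt]]. destruct (Hbig t) as [t' [Ht' Hgt']].
      exists (t' + tau). split. lra. rewrite S_INR.
      assert (V (t' + tau) <= V t' - eps / 2 * tau) by (apply Hdrop; lra).
      assert (V t' <= V t) by (apply Hmono; lra). lra. }
  destruct (nat_above (V 0 / (eps / 2 * tau))) as [k Hk].
  destruct (Hind k) as [t [Ht HVt]].
  assert (0 < eps / 2 * tau) by (apply Rmult_lt_0_compat; lra).
  assert (V 0 < INR k * (eps / 2 * tau)).
  { apply (Rmult_lt_compat_r (eps / 2 * tau)) in Hk; auto. unfold Rdiv in Hk at 1.
    rewrite Rmult_assoc, Rinv_l in Hk by lra. lra. }
  specialize (HV t Ht). lra.
Qed.

Lemma rsum_abs n f : Rabs (rsum n f) <= rsum n (fun i => Rabs (f i)).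
Proof. induction n; simpl. rewrite Rabs_R0; lra. eapply Rle_trans. apply Rabs_triang. lra. Qed.

Lemma field_bound n d b h j : (j < n)%nat -> admissible_gain (h j) ->
  exists K, 0 <= K /\ forall y, in_Xi n y -> Rabs (sis_field n d b h y j) <= K.
Proof. intros Hj [Hh0 [[Mb HMb] _]].
  set (S := rsum n (fun k => Rabs (b j k))).
  assert (HS : 0 <= S) by (apply rsum_nonneg; intros; apply Rabs_pos).
  exists (Rabs (d j) + Rabs Mb + S). split. assert (0 <= Rabs (d j)) by apply Rabs_pos.
  assert (0 <= Rabs Mb) by apply Rabs_pos. lra.
  intros y Hy. unfold sis_field.
  assert (Hyj := Hy j Hj). assert (H0 := Hh0 (y j) Hyj). assert (H1 := HMb (y j) Hyj).
  assert (HB : Rabs (rsum n (fun k => b j k * y k)) <= S).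
  { eapply Rle_trans. apply rsum_abs. apply rsum_le. intros k Hk. rewrite Rabs_mult.
    assert (Hyk := Hy k Hk). rewrite (Rabs_right (y k)) by lra.
    assert (0 <= Rabs (b j k)) by apply Rabs_pos. nra. }
  eapply Rle_trans. apply Rabs_triang. rewrite !Rabs_mult.
  rewrite (Rabs_right (y j)) by lra. rewrite (Rabs_right (1 - y j)) by lra.
  rewrite Rabs_Ropp.
  assert (Rabs (d j + h j (y j)) <= Rabs (d j) + Rabs Mb).
  { eapply Rle_trans. apply Rabs_triang. rewrite (Rabs_right (h j (y j))) by lra.
    assert (Mb <= Rabs Mb) by apply Rle_abs. lra. }
  assert (0 <= Rabs (d j + h j (y j))) by apply Rabs_pos.
  assert (0 <= Rabs (rsum n (fun k => b j k * y k))) by apply Rabs_pos.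
  nra. Qed.

Lemma deriv_rsum m (u du : R -> nat -> R) t : (forall j, (j<m)%nat -> derivable_pt_lim (fun s => u s j) t (du t j)) ->
  derivable_pt_lim (fun s => rsum m (u s)) t (rsum m (du t)).
Proof. induction m; intros H; simpl. apply derivable_pt_lim_const.
  apply (derivable_pt_lim_plus (fun s => rsum m (u s)) (fun s => u s m)).
  apply IHm; intros; apply H; lia. apply H; lia. Qed.

Theorem theorem3 (n : nat) (d : nat -> R) (b : nat -> nat -> R) (h : nat -> R -> R)
  (Hn : (2 <= n)%nat)
  (Hd : forall i, (i < n)%nat -> 0 < d i)
  (Hb : forall i j, (i < n)%nat -> (j < n)%nat -> 0 <= b i j)
  (Hirr : irreducible n b)
  (Hh : forall i, (i < n)%nat -> admissible_gain (h i))
  (Hs : spectral_abscissa_nonpos n (minusD_plusB d b)) :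
  (* 0_n is the unique equilibrium in Xi_n *)
  (forall xs : nat -> R, in_Xi n xs ->
     (is_equilibrium n d b h xs <-> (forall i, (i < n)%nat -> xs i = 0))) /\
  (* every trajectory starting in Xi_n converges to 0_n *)
  (forall x : R -> nat -> R,
     in_Xi n (x 0) ->
     (forall t, 0 <= t -> in_Xi n (x t)) ->
     (forall i t, (i < n)%nat -> 0 <= t ->
        derivable_pt_lim (fun s => x s i) t (sis_field n d b h (x t) i)) ->
     forall i, (i < n)%nat ->
       forall eps, 0 < eps -> exists T, forall t, T <= t -> Rabs (x t i) < eps).
Proof.
  destruct (left_vec n d b Hn Hd Hb Hirr Hs) as [v [Hv HA]].
  split. { apply (equil_part n d b h v); auto. }
  intros x Hx0 HxT Hder i Hi eps Heps.
  assert (Hlipx : forall j, (j<n)%nat -> lipE (fun t => x t j)).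
  { intros j Hj. destruct (field_bound n d b h j Hj (Hh j Hj)) as [K [HK HKb]].
    exists K. split; auto. intros s t Hs0 Ht0.
    apply (lip_of_deriv (fun t => x t j) (fun t => sis_field n d b h (x t) j) K); auto. }
  assert (Hbx : forall j, (j<n)%nat -> boundE (fun t => x t j)).
  { intros j Hj. exists 1. split. lra. intros t Ht. specialize (HxT t Ht j Hj). rewrite Rabs_right; lra. }
  assert (HlipB : forall j, (j<n)%nat -> lipE (fun t => mxvec n b (x t) j)).
  { intros j Hj. unfold mxvec. apply (lipE_rsum n (fun t k => b j k * x t k)). intros k Hk.
    apply (lipE_mult (fun _ => b j k) (fun t => x t k)); auto using lipE_const, boundE_const. }
  assert (HbB : forall j, (j<n)%nat -> boundE (fun t => mxvec n b (x t) j)).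
  { intros j Hj. unfold mxvec. apply (boundE_rsum n (fun t k => b j k * x t k)). intros k Hk.
    apply (boundE_mult (fun _ => b j k) (fun t => x t k)); auto using boundE_const. }
  set (g := fun t => rsum n (fun j => v j * (x t j * mxvec n b (x t) j))).
  assert (Hlipg : lipE g).
  { unfold g. apply (lipE_rsum n (fun t j => v j * (x t j * mxvec n b (x t) j))). intros j Hj.
    apply (lipE_mult (fun _ => v j) (fun t => x t j * mxvec n b (x t) j)); auto using lipE_const, boundE_const.
    apply (lipE_mult (fun t => x t j) (fun t => mxvec n b (x t) j)); auto.
    apply (boundE_mult (fun t => x t j) (fun t => mxvec n b (x t) j)); auto. }
  destruct Hlipg as [L [HL Hlg]].
  assert (Hgnn : forall t, 0 <= t -> forall j, (j<n)%nat -> 0 <= v j * (x t j * mxvec n b (x t) j)).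
  { intros t Ht j Hj. apply Rmult_le_pos. apply Rlt_le, Hv; auto. apply Rmult_le_pos.
    apply (HxT t Ht j Hj). apply Bx_nonneg; auto. }
  assert (Hg0 := g_to_0 (fun t => rsum n (fun j => v j * x t j))
                        (fun t => rsum n (fun j => v j * sis_field n d b h (x t) j)) g L HL).
  assert (Hgev : forall e, 0 < e -> exists T, forall t, T <= t -> g t < e).
  { apply Hg0; auto.
    - intros t Ht. apply (deriv_rsum n (fun s j => v j * x s j) (fun s j => v j * sis_field n d b h (x s) j)).
      intros j Hj. apply (derivable_pt_lim_scal (fun s => x s j)). apply Hder; auto.
    - intros t Ht. apply key_ineq; auto.
    - intros t Ht. apply rsum_nonneg. auto.
    - intros t Ht. apply rsum_nonneg. intros j Hj. apply Rmult_le_pos. apply Rlt_le, Hv; auto. apply (HxT t Ht j Hj). }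
  apply (comp_conv (fun t => x t i) (fun t => sis_field n d b h (x t) i) (fun t => mxvec n b (x t) i) (d i)); auto.
  - intros t Ht. apply (HxT t Ht i Hi).
  - intros t Ht. apply Bx_nonneg; auto.
  - intros t Ht. unfold sis_field. fold (mxvec n b (x t) i).
    assert (Hxi := HxT t Ht i Hi). assert (HB := Bx_nonneg n b (x t) i Hi Hb (HxT t Ht)).
    destruct (Hh i Hi) as [Hh0 _]. assert (H0 := Hh0 (x t i) Hxi). nra.
  - intros eta Heta. destruct (Hgev (eta * v i)) as [T HT]. { apply Rmult_lt_0_compat; auto. }
    exists (Rmax T 0). intros t Ht. assert (HT1 := Rmax_l T 0). assert (HT2 := Rmax_r T 0).
    specialize (HT t ltac:(lra)). unfold g in HT.
    assert (v i * (x t i * mxvec n b (x t) i) <= rsum n (fun j => v j * (x t j * mxvec n b (x t) j))).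
    { apply (rsum_ge_term n (fun j => v j * (x t j * mxvec n b (x t) j))); auto.
      intros j Hj _. apply Hgnn; auto. lra. }
    assert (Hvi := Hv i Hi). apply (Rmult_lt_reg_l (v i)); auto. lra.
Qed.
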